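(* For every $m\ge1$, the cardinality sensitivity of affine maximizers for $2$ players and $m$ items is $\mu_c(2,m)=1$.
   Context: Players $[n]$, items $[m]$, allocations $\Omega=\{A\in\{0,1\}^{n\times m}:\sum_iA_{i,j}=1\ \forall j\}$; $A_i\in\{0,1\}^m$ denotes the bundle (row) of player $i$. An affine maximizer is $f:\mathbb R^{n\times m}\to\Omega$ with $f(\theta)\in\arg\max_{A\in\Omega}\{c_A+\sum_iw_i\theta_i\cdot A_i\}$ for nonzero weights $w_i$ and reals $c_A$. Difference sets $Q_A=\mathrm{cl}\{\theta:f(\theta)=A\}$; indifference complex $\mathcal I(f)=\{\mathcal O\subseteq\Omega:\bigcap_{A\in\mathcal O}Q_A\ne\emptyset\}$. Let $\Psi_{(n,m)}$ be the set of indifference complexes of affine maximizers. With $\mathrm{Cd}(a,b)=\big||a|_1-|b|_1\big|$, define $\mu_c(n,m)=\min_{\mathcal I\in\Psi_{(n,m)}}\max\{\mathrm{Cd}(A_i,B_i): A,B\in F\text{ for some }F\in\mathcal I,\ i\in[n]\}$. *)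

(* Defs.v *)
From HB Require Import structures.
From mathcomp Require Import all_boot all_order all_algebra.
From mathcomp Require Import all_classical all_reals all_analysis.
Set Implicit Arguments. Unset Strict Implicit. Unset Printing Implicit Defensive.
Import Order.TTheory GRing.Theory Num.Theory.
Import numFieldNormedType.Exports.
Local Open Scope classical_set_scope.
Local Open Scope ring_scope.

(* Allocations Omega = { A in {0,1}^{n x m} : sum_i A_{i,j} = 1 for all j },
   encoded as boolean n x m matrices with exactly one true entry per column. *)
Definition Omega (n m : nat) : finType :=
  {A : 'M[bool]_(n, m) | [forall j : 'I_m, #|[set i : 'I_n | A i j]| == 1%N]}.

Definition allocmx {n m} (A : Omega n m) : 'M[bool]_(n, m) := val A.

Definition bundle_size {n m} (A : Omega n m) (i : 'I_n) : nat :=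
  #|[set j : 'I_m | allocmx A i j]|.

Definition bundle_value {R : realType} {n m} (theta : 'M[R]_(n, m))
    (A : Omega n m) (i : 'I_n) : R :=
  \sum_(j < m) theta i j * (allocmx A i j)%:R.

Definition affine_maximizer {R : realType} {n m}
    (f : 'M[R]_(n, m) -> Omega n m) : Prop :=
  exists (w : 'I_n -> R) (c : Omega n m -> R),
    (forall i, w i != 0) /\
    forall theta (B : Omega n m),
      c B + \sum_(i < n) w i * bundle_value theta B i
      <= c (f theta) + \sum_(i < n) w i * bundle_value theta (f theta) i.

Definition diff_set {R : realType} {n m} (f : 'M[R]_(n, m) -> Omega n m)
    (A : Omega n m) : set 'M[R]_(n, m) :=
  closure [set theta | f theta = A].

Definition in_indiff {R : realType} {n m} (f : 'M[R]_(n, m) -> Omega n m)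
    (O : {set Omega n m}) : Prop :=
  exists theta, forall A, A \in O -> diff_set f A theta.

Definition Cd {n m} (A B : Omega n m) (i : 'I_n) : nat :=
  `|(bundle_size A i)%:Z - (bundle_size B i)%:Z|%N.

Definition cd_max {R : realType} {n m} (f : 'M[R]_(n, m) -> Omega n m) : nat :=
  (\max_(F : {set Omega n m} | `[< in_indiff f F >])
     \max_(A in F) \max_(B in F) \max_(i < n) Cd A B i)%N.

Definition is_mu_c (R : realType) (n m k : nat) : Prop :=
  (exists f : 'M[R]_(n, m) -> Omega n m, affine_maximizer f /\ cd_max f = k) /\
  (forall f : 'M[R]_(n, m) -> Omega n m, affine_maximizer f -> (k <= cd_max f)%N).

(* Main.v *)
Require Import Defs.
From HB Require Import structures.
From mathcomp Require Import all_boot all_order all_algebra.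
From mathcomp Require Import all_classical all_reals all_analysis.
From mathcomp Require Import lra zify.
Set Implicit Arguments. Unset Strict Implicit. Unset Printing Implicit Defensive.
Import Order.TTheory GRing.Theory Num.Theory.
Import numFieldNormedType.Exports.
Local Open Scope classical_set_scope.
Local Open Scope ring_scope.
Lemma cardconv (T : finType) (b : pred T) : #|[set i | b i]| = #|[set i | b i]%SET|.
Proof. apply: eq_card => x. rewrite !inE /in_set /=. by apply/asboolP/idP. Qed.

Section Basics.
Variable m : nat.

Lemma alloc1 (A : Omega 2 m) j : allocmx A 1 j = ~~ allocmx A 0 j.
Proof.
have H := valP A; move/forallP: H => H.
have := H j; rewrite cardconv => /cards1P [x Hx]. rewrite -/(allocmx A) in Hx.
have h0 : (ord0 \in [set i | allocmx A i j]%SET) = (ord0 == x) by rewrite Hx inE.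
have h1 : ((1 : 'I_2) \in [set i | allocmx A i j]%SET) = (1 == x) by rewrite Hx inE.
rewrite inE in h0; rewrite inE in h1.
rewrite h0 h1.
by case: x {Hx h0 h1} => [[|[|k]] Hk] //.
Qed.

Definition alloc_of (S : {set 'I_m}) : Omega 2 m.
Proof.
refine (exist _ (\matrix_(i < 2, j < m) ((i == ord0) == (j \in S))) _).
apply/forallP => j; rewrite cardconv; apply/cards1P.
exists (if j \in S then ord0 else 1); apply/setP => i; rewrite !inE mxE.
by case: (j \in S); case: i => [[|[|k]] Hk].
Defined.

Lemma alloc_of0 S j : allocmx (alloc_of S) 0 j = (j \in S).
Proof. by rewrite /allocmx /= mxE. Qed.

Lemma bsizeE (A : Omega 2 m) i : bundle_size A i = #|[set j | allocmx A i j]%SET|.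
Proof. by rewrite /bundle_size cardconv. Qed.

Lemma bsize_of S : bundle_size (alloc_of S) 0 = #|S|.
Proof. by rewrite bsizeE; apply: eq_card => j; rewrite inE alloc_of0. Qed.

Lemma bsize1 (A : Omega 2 m) : bundle_size A 1 = (m - bundle_size A ord0)%N.
Proof.
rewrite !bsizeE.
have -> : #|[set j | allocmx A 1 j]%SET| = #|~: [set j | allocmx A ord0 j]%SET|.
  by apply: eq_card => j; rewrite !inE alloc1.
have := cardsC [set j | allocmx A ord0 j]%SET; rewrite card_ord; lia.
Qed.

Lemma bsize_le (A : Omega 2 m) i : (bundle_size A i <= m)%N.
Proof. by rewrite bsizeE -[X in (_ <= X)%N](card_ord m) max_card. Qed.

End Basics.
Lemma sum_ind (R : realType) (m : nat) (b : pred 'I_m) :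
  \sum_(j < m) ((b j)%:R : R) = (#|[set j | b j]%SET|)%:R.
Proof.
rewrite -natr_sum; congr _%:R; rewrite -sum1_card [RHS]big_mkcond /=.
by apply: eq_bigr => j _; rewrite inE; case: (b j).
Qed.

Lemma cont_sum (T : topologicalType) (R : realType) (I : Type) (s : seq I)
  (F : I -> T -> R) : (forall i, continuous (F i)) ->
  continuous (fun x => \sum_(i <- s) F i x).
Proof.
move=> HF; elim: s => [|a s IH].
  have -> : (fun x => \sum_(i <- [::]) F i x) = (fun _ => 0).
    by apply: funext => x; rewrite big_nil.
  by move=> x; apply: cvg_cst.
have -> : (fun x => \sum_(i <- a :: s) F i x) = (fun x => F a x + \sum_(i <- s) F i x).
  by apply: funext => x; rewrite big_cons.
by move=> x; apply: cvgD; [exact: HF | exact: IH].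
Qed.

Lemma cont_bv (R : realType) n m (B : Omega n m) i :
  continuous (fun th : 'M[R]_(n, m) => bundle_value th B i).
Proof.
rewrite /bundle_value; apply: cont_sum => j x.
apply: (@continuous_comp _ _ _ (fun th : 'M[R]_(n, m) => th i j)
   ( *%R^~ ((allocmx B i j)%:R : R))).
  exact: coord_continuous.
exact: mulrr_continuous.
Qed.

Definition obj (R : realType) n m (w : 'I_n -> R) (c : Omega n m -> R)
  (th : 'M[R]_(n, m)) (B : Omega n m) : R :=
  c B + \sum_(i < n) w i * bundle_value th B i.

Lemma cont_obj (R : realType) n m w c (B : Omega n m) :
  continuous (fun th : 'M[R]_(n, m) => obj w c th B).
Proof.
rewrite /obj => x.
apply: (@continuousD _ _ _ (fun _ => c B)
  (fun th : 'M[R]_(n, m) => \sum_(i < n) w i * bundle_value th B i)).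
  exact: cst_continuous.
move: x; apply: cont_sum => i y.
apply: (@continuous_comp _ _ _ (fun th : 'M[R]_(n, m) => bundle_value th B i)
   ( *%R (w i))).
  exact: cont_bv.
exact: mulrl_continuous.
Qed.

Lemma opt_closure (R : realType) n m w c (f : 'M[R]_(n, m) -> Omega n m) A th :
  (forall th' B, obj w c th' B <= obj w c th' (f th')) ->
  diff_set f A th -> forall B, obj w c th B <= obj w c th A.
Proof.
move=> Hf Hcl B.
have cl : closed [set x : 'M[R]_(n, m) | obj w c x B <= obj w c x A].
  have -> : [set x : 'M[R]_(n, m) | obj w c x B <= obj w c x A] =
    (fun x => obj w c x A - obj w c x B) @^-1` [set y : R | 0 <= y].
    by apply/seteqP; split => x /=; rewrite subr_ge0.
  apply: preimage_closed; last exact: closed_ge.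
  move=> x _; apply: (@continuousB _ _ _ (fun x => obj w c x A) (fun x => obj w c x B)); exact: cont_obj.
apply: cl; apply: (closureS _ Hcl) => x /= <-; exact: Hf.
Qed.
Section Existence.
Variables (R : realType) (m : nat).

Definition w1 : 'I_2 -> R := fun _ => 1.
Definition c0 (B : Omega 2 m) : R := - ((bundle_size B ord0 ^ 2)%N)%:R.

Definition full : Omega 2 m := alloc_of [set: 'I_m]%SET.

Definition fopt (th : 'M[R]_(2, m)) : Omega 2 m :=
  Order.arg_max full (fun _ => true) (fun B => obj w1 c0 th B).

Lemma fopt_max th B : obj w1 c0 th B <= obj w1 c0 th (fopt th).
Proof. by rewrite /fopt; case: arg_maxP => //= A _ H; exact: H. Qed.

Lemma fopt_am : affine_maximizer fopt.
Proof.
exists w1, c0; split; first by move=> i; rewrite /w1 oner_neq0.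
exact: fopt_max.
Qed.

Lemma objE th (B : Omega 2 m) : obj w1 c0 th B =
  c0 B + \sum_(j < m) (th ord0 j - th 1 j) * (allocmx B ord0 j)%:R
  + \sum_(j < m) th 1 j.
Proof.
rewrite /obj !big_ord_recr big_ord0 /= /w1 !mul1r add0r -addrA; congr (_ + _).
rewrite /bundle_value -!big_split /=; apply: eq_bigr => j _.
have -> : widen_ord (leqnSn 1) ord_max = ord0 :> 'I_2 by apply: val_inj.
have -> : ord_max = 1 :> 'I_2 by apply: val_inj.
rewrite alloc1; case: (allocmx B ord0 j) => /=; rewrite ?mulr1 ?mulr0; lra.
Qed.

Lemma exch th (A B : Omega 2 m) :
  (forall X, obj w1 c0 th X <= obj w1 c0 th A) ->
  (forall X, obj w1 c0 th X <= obj w1 c0 th B) ->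
  (bundle_size B ord0 <= (bundle_size A ord0).+1)%N.
Proof.
move=> HA HB; rewrite leqNgt; apply/negP => Hlt.
set SA := [set j | allocmx A ord0 j]%SET.
set SB := [set j | allocmx B ord0 j]%SET.
have eA : bundle_size A ord0 = #|SA| by rewrite bsizeE.
have eB : bundle_size B ord0 = #|SB| by rewrite bsizeE.
have : ~~ (SB \subset SA).
  apply/negP => /subset_leq_card; rewrite -eA -eB; lia.
case/subsetPn => j0 j0B j0A.
set A' := alloc_of (j0 |: SA). set B' := alloc_of (SB :\ j0).
have eA' : bundle_size A' ord0 = (#|SA|).+1.
  by rewrite bsize_of cardsU1 j0A.
have eB' : bundle_size B' ord0 = (#|SB|).-1.
  by rewrite bsize_of (cardsD1 j0 SB) j0B.
have hs : \sum_(j < m) (th ord0 j - th 1 j) * (allocmx A' ord0 j)%:R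
        + \sum_(j < m) (th ord0 j - th 1 j) * (allocmx B' ord0 j)%:R
        = \sum_(j < m) (th ord0 j - th 1 j) * (allocmx A ord0 j)%:R
        + \sum_(j < m) (th ord0 j - th 1 j) * (allocmx B ord0 j)%:R.
  rewrite -!big_split /=; apply: eq_bigr => j _.
  rewrite !alloc_of0 !inE.
  have [->|ne] := eqVneq j j0.
    move: j0B j0A; rewrite !inE => -> /negbTE ->; rewrite /=; lra.
  by rewrite /=.
have h1 := HA A'. have h2 := HB B'.
rewrite !objE in h1 h2.
have hc : c0 A' + c0 B' <= c0 A + c0 B by lra.
move: hc; rewrite /c0 eA' eB' eA eB -!opprD lerN2 -!natrD ler_nat.
move: Hlt; rewrite eA eB; nia.
Qed.

Lemma Cd_le1 (A B : Omega 2 m) i th :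
  (forall X, obj w1 c0 th X <= obj w1 c0 th A) ->
  (forall X, obj w1 c0 th X <= obj w1 c0 th B) ->
  (Cd A B i <= 1)%N.
Proof.
move=> HA HB; have h1 := exch HA HB; have h2 := exch HB HA.
have la := bsize_le A ord0; have lb := bsize_le B ord0.
rewrite /Cd.
case: i => [[|[|k]] Hk] //.
- have -> : Ordinal Hk = ord0 by apply: val_inj.
  lia.
- have -> : Ordinal Hk = 1 by apply: val_inj.
  rewrite !bsize1; lia.
Qed.

Lemma cd_max_fopt_le : (cd_max fopt <= 1)%N.
Proof.
rewrite /cd_max; apply/bigmax_leqP => F /asboolP [th Hth].
apply/bigmax_leqP => A AF; apply/bigmax_leqP => B BF; apply/bigmax_leqP => i _.
apply: (@Cd_le1 A B i th).
  exact: (opt_closure fopt_max (Hth A AF)).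
exact: (opt_closure fopt_max (Hth B BF)).
Qed.

End Existence.
Lemma closure_seq (T : topologicalType) (X : eqType) (P : X -> set T) (s : seq X) x :
  closure (fun t => exists2 A, A \in s & P A t) x -> exists A, closure (P A) x.
Proof.
elim: s => [|a s IH] Hcl.
  have [y [[A] ]] := Hcl _ filterT; by rewrite in_nil.
have E : (fun t => exists2 A, A \in a :: s & P A t) =
         P a `|` (fun t => exists2 A, A \in s & P A t).
  apply/seteqP; split => t /=.
    case=> A; rewrite in_cons => /orP [/eqP -> Pa|As PA]; [by left|by right; exists A].
  case=> [Pa|[A As PA]]; [by exists a; rewrite ?mem_head|by exists A; rewrite // in_cons As orbT].
move: Hcl; rewrite E closureU => -[Ha|Hs]; [by exists a|exact: IH].
Qed.

Lemma closure_fin (T : topologicalType) (X : finType) (P : X -> set T) x :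
  closure (fun t => exists A, P A t) x -> exists A, closure (P A) x.
Proof.
move=> H; apply: (@closure_seq _ _ P (enum X)); apply: (closureS _ H).
by move=> t [A PA]; exists A; rewrite ?mem_enum.
Qed.

Lemma cl_map (T U : topologicalType) (phi : T -> U) (S : set T) (P : set U) x :
  continuous phi -> S `<=` phi @^-1` P -> closure S x -> closure P (phi x).
Proof.
move=> cphi SP Hx.
have cl : closed (phi @^-1` closure P).
  apply: preimage_closed; last exact: closed_closure.
  by move=> y _; exact: cphi.
apply: cl; apply: (closureS _ Hx) => t St; apply: subset_closure; exact: SP.
Qed.

Section Lower.
Variables (R : realType) (m : nat) (hm : (1 <= m)%N).
Variable f : 'M[R]_(2, m) -> Omega 2 m.
Variables (w : 'I_2 -> R) (c : Omega 2 m -> R).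
Hypothesis Hw : forall i, w i != 0.
Hypothesis Hf : forall th B, obj w c th B <= obj w c th (f th).

Definition E : 'M[R]_(2, m) := \matrix_(i, j) (if i == ord0 then (w ord0)^-1 else 0).
Definition phi (t : R) : 'M[R]_(2, m) := t *: E.

Lemma objphi t B : obj w c (phi t) B = c B + t * (bundle_size B ord0)%:R.
Proof.
rewrite /obj !big_ord_recr big_ord0 /= add0r; congr (_ + _).
have -> : widen_ord (leqnSn 1) ord_max = ord0 :> 'I_2 by apply: val_inj.
rewrite /bundle_value.
have -> : \sum_(j < m) phi t ord_max j * (allocmx B ord_max j)%:R = 0.
  by apply: big1 => j _; rewrite /phi !mxE /= mulr0 mul0r.
have -> : \sum_(j < m) phi t ord0 j * (allocmx B ord0 j)%:R =
  (t * (w ord0)^-1) * \sum_(j < m) (allocmx B ord0 j)%:R.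
  by rewrite mulr_sumr; apply: eq_bigr => j _; rewrite /phi !mxE /=.
rewrite sum_ind -bsizeE mulr0 addr0 mulrA mulrCA mulfV ?mulr1 //; exact: Hw.
Qed.

Definition k t := bundle_size (f (phi t)) ord0.

Lemma optk t B : c B + t * (bundle_size B ord0)%:R <= c (f (phi t)) + t * (k t)%:R.
Proof. by rewrite -!objphi; exact: Hf. Qed.

Definition Cb := \sum_(B : Omega 2 m) `|c B|.

Lemma cbd X Y : c X - c Y <= 2 * Cb.
Proof.
have h B : `|c B| <= Cb.
  rewrite /Cb (bigD1 B) //= lerDl; apply: sumr_ge0 => ? _; exact: normr_ge0.
have := ler_norm (c X); have := ler_norm (- c Y); rewrite normrN.
have := h X; have := h Y; lra.
Qed.

Lemma Cb_ge0 : 0 <= Cb.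
Proof. by apply: sumr_ge0 => ? _; exact: normr_ge0. Qed.

Definition fullA : Omega 2 m := alloc_of [set: 'I_m]%SET.
Definition emptyA : Omega 2 m := alloc_of (finset.set0 : {set 'I_m}).

Lemma mono t s : t < s -> (k t <= k s)%N.
Proof.
move=> ts; rewrite leqNgt; apply/negP => lt.
have h1 := optk t (f (phi s)); have h2 := optk s (f (phi t)).
rewrite -/(k s) in h1; rewrite -/(k t) in h2.
have : (k s)%:R + 1 <= (k t)%:R :> R by rewrite natr1 ler_nat.
nra.
Qed.

Lemma kbig t : 2 * Cb < t -> k t = m.
Proof.
move=> Ht; apply/eqP; rewrite eqn_leq bsize_le /=; rewrite leqNgt; apply/negP => lt.
have h := optk t fullA; rewrite /fullA bsize_of cardsT card_ord in h.
have := cbd (f (phi t)) fullA.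
have : (k t)%:R + 1 <= m%:R :> R by rewrite natr1 ler_nat.
have := Cb_ge0; nra.
Qed.

Lemma ksmall t : t < - (2 * Cb) -> k t = 0%N.
Proof.
move=> Ht; apply/eqP; rewrite -leqn0 leqNgt; apply/negP => lt.
have h := optk t emptyA; rewrite /emptyA bsize_of cards0 mulr0 addr0 in h.
have := cbd (f (phi t)) emptyA.
have : 1 <= (k t)%:R :> R by rewrite ler1n.
have := Cb_ge0; nra.
Qed.

Lemma lower : (1 <= cd_max f)%N.
Proof.
set T0 := [set t : R | k t = 0%N].
have ne : T0 (- (2 * Cb) - 1) by apply: ksmall; lra.
have ub : has_ubound T0.
  exists (2 * Cb) => t; rewrite /T0 /= => kt0; rewrite leNgt; apply/negP => lt.
  by move: kt0; rewrite kbig // => m0; move: hm; rewrite m0.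
have hs : has_sup T0 by split => //; exists (- (2 * Cb) - 1).
set ts := sup T0.
have cl0 : closure T0 ts by apply: closure_sup => //; exists (- (2 * Cb) - 1).
have above t : ts < t -> (1 <= k t)%N.
  move=> lt; rewrite lt0n; apply/negP => /eqP kt0.
  have := sup_upper_bound hs kt0; rewrite -/ts; rewrite leNgt lt.
  by [].
have cl1 : closure [set t | ts < t] ts by rewrite closure_gt /=.
have [A HA] : exists A, closure [set t | T0 t /\ f (phi t) = A] ts.
  apply: closure_fin; apply: (closureS _ cl0) => t T0t; by exists (f (phi t)).
have [B HB] : exists B, closure [set t | ts < t /\ f (phi t) = B] ts.
  apply: closure_fin; apply: (closureS _ cl1) => t T0t; by exists (f (phi t)).
have cphi : continuous phi by move=> x; exact: scalel_continuous.
have dA : diff_set f A (phi ts).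
  by apply: (cl_map cphi _ HA) => t [].
have dB : diff_set f B (phi ts).
  by apply: (cl_map cphi _ HB) => t [].
have [tA [[T0A fA] _]] := HA _ filterT.
have [tB [[ltB fB] _]] := HB _ filterT.
have kA : bundle_size A ord0 = 0%N by rewrite -fA.
have kB : (1 <= bundle_size B ord0)%N by rewrite -fB; exact: above.
set F := [set A; B]%SET.
have HF : in_indiff f F.
  exists (phi ts) => X; rewrite !inE => /orP [/eqP ->|/eqP ->] //.
apply: (@leq_trans (Cd A B ord0)).
  rewrite /Cd kA; lia.
rewrite /cd_max.
apply: (leq_trans _ (@leq_bigmax_cond _ (fun F => `[< in_indiff f F >]) _ F _)); last first.
  by apply/asboolP.
apply: (leq_trans _ (@leq_bigmax_cond _ (fun X => X \in F) _ A _)); last first.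
  by rewrite !inE eqxx.
apply: (leq_trans _ (@leq_bigmax_cond _ (fun X => X \in F) _ B _)); last first.
  by rewrite !inE eqxx orbT.
exact: (@leq_bigmax_cond _ (fun _ => true) _ ord0).
Qed.

End Lower.
Lemma lower_am (R : realType) (m : nat) (hm : (1 <= m)%N)
  (f : 'M[R]_(2, m) -> Omega 2 m) : affine_maximizer f -> (1 <= cd_max f)%N.
Proof.
move=> [w [c [Hw Hf]]].
exact: (@lower R m hm f w c Hw Hf).
Qed.

Theorem mainTheorem9 (R : realType) (m : nat) (hm : (1 <= m)%N) :
  is_mu_c R 2 m 1.
Proof.
split; last by move=> f; exact: lower_am.
exists (@fopt R m); split; first exact: fopt_am.
apply/eqP; rewrite eqn_leq cd_max_fopt_le /=.
exact: lower_am (@fopt_am R m).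
Qed.
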